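(* Let $G$ be a planar PCC graph and let $Z$ be the number of vertices $v$ with face vector $f(v)=(5,6,7)$ or $f(v)=(3,3,5,7)$. Then $Z\le 210$.
   Context: $G$ is a finite simple connected graph 2-cell embedded in the sphere; the face vector $f(v)$ is the multiset of sizes (boundary walk lengths) of the faces incident to $v$, one per corner, in nondecreasing order; $K(v)=1-\frac{\deg(v)}{2}+\sum_{\sigma\in F(v)}\frac1{|\sigma|}$. A prism (resp. antiprism) of order $N$ is the planar graph with $2N$ vertices, two $N$-faces and $N$ quadrilaterals (resp. $2N$ triangles), each vertex incident to two quadrilaterals and one $N$-face (resp. three triangles and one $N$-face). A planar PCC graph is such a $G$ with $K(v)>0$, $\deg(v)\ge3$ for all $v$, not a prism or antiprism. *)

(* Defs.v *)
From HB Require Import structures.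
From mathcomp Require Import all_boot all_order all_algebra.
Set Implicit Arguments. Unset Strict Implicit. Unset Printing Implicit Defensive.
Import Order.TTheory GRing.Theory Num.Theory.

(* A combinatorial map: darts, a fixed-point-free involution [edge] pairing
   the two half-edges of each edge, and a permutation [node] giving the
   cyclic rotation of darts around each vertex.  Vertices = node-orbits,
   edges = edge-orbits, faces = orbits of [face := node \o edge]. *)
Unset Implicit Arguments.
Record cmap := CMap {
  dart : finType;
  edge : dart -> dart;
  node : dart -> dart;
  edgeK : involutive edge;
  edge_nofix : forall d, edge d != d;
  node_inj : injective node
}.

Set Implicit Arguments.
Definition face (m : cmap) : dart m -> dart m := fun d => node m (edge m d).
Arguments face m : clear implicits.

Definition nV (m : cmap) : nat := fcard (node m) (dart m).
Definition nE (m : cmap) : nat := fcard (edge m) (dart m).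
Definition nF (m : cmap) : nat := fcard (face m) (dart m).

Definition connected_map (m : cmap) : Prop :=
  forall x y : dart m, connect (fun a b => (b == edge m a) || (b == node m a)) x y.

(* connected + Euler characteristic 2 : a 2-cell embedding in the sphere *)
Definition spherical (m : cmap) : Prop :=
  connected_map m /\ (nV m + nF m = nE m + 2)%N.

Definition simple_map (m : cmap) : Prop :=
  (forall d : dart m, ~~ fconnect (node m) d (edge m d)) /\
  (forall d d' : dart m, fconnect (node m) d d' ->
      fconnect (node m) (edge m d) (edge m d') -> d = d').

Definition deg (m : cmap) (d : dart m) : nat := order (node m) d.

Definition fsize (m : cmap) (d : dart m) : nat := order (face m) d.

(* face vector of the vertex of d: one face size per corner (= per dart at the
   vertex); as a multiset, compared up to permutation *)
Definition fvec (m : cmap) (d : dart m) : seq nat :=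
  [seq fsize x | x <- orbit (node m) d].

Definition curv (m : cmap) (d : dart m) : rat :=
  1 - (deg d)%:R / 2 + \sum_(x <- orbit (node m) d) ((fsize x)%:R)^-1.

Definition face_sizes (m : cmap) : seq nat :=
  [seq fsize x | x <- enum (froots (face m))].

Definition is_prism (m : cmap) : Prop :=
  exists N : nat, nV m = (2 * N)%N /\
    perm_eq (face_sizes m) (nseq 2 N ++ nseq N 4) /\
    (forall d : dart m, perm_eq (fvec d) [:: 4; 4; N]).

Definition is_antiprism (m : cmap) : Prop :=
  exists N : nat, nV m = (2 * N)%N /\
    perm_eq (face_sizes m) (nseq 2 N ++ nseq (2 * N) 3) /\
    (forall d : dart m, perm_eq (fvec d) [:: 3; 3; 3; N]).

Definition planar_PCC (m : cmap) : Prop :=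
  spherical m /\ simple_map m /\
  (forall d : dart m, (0 < curv d)%R /\ (3 <= deg d)%N) /\
  ~ is_prism m /\ ~ is_antiprism m.

(* number of vertices with face vector (5,6,7) or (3,3,5,7);
   vertices are counted via the representative (root) dart of each node orbit *)
Definition Zcount (m : cmap) : nat :=
  #|[pred d : dart m | froots (node m) d &&
       (perm_eq (fvec d) [:: 5; 6; 7] || perm_eq (fvec d) [:: 3; 3; 5; 7])]|.

(* Main.v *)
Require Import Defs.
From mathcomp Require Import all_boot all_order all_algebra.
From mathcomp Require Import ring lra.
Set Implicit Arguments. Unset Strict Implicit. Unset Printing Implicit Defensive.
Import Order.TTheory GRing.Theory Num.Theory.

Local Open Scope ring_scope.

Section Orb.
Variables (T : finType) (f : T -> T) (finj : injective f).

Lemma sum_orbits (F : T -> rat) :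
  \sum_(r | froots f r) \sum_(x <- orbit f r) F x = \sum_x F x.
Proof.
have symf := fconnect_sym finj.
rewrite [RHS](partition_big (froot f) (froots f)) /=; last first.
  by move=> i _; exact: (roots_root symf).
apply: eq_bigr => r rr.
rewrite big_uniq ?orbit_uniq //; apply: eq_bigl => x.
rewrite -fconnect_orbit -(root_connect symf) (eqP rr) eq_sym //.
Qed.

Lemma sum_inv_order : \sum_x ((order f x)%:R : rat)^-1 = (#|froots f|)%:R.
Proof.
rewrite -sum_orbits -sumr_const; apply: eq_bigr => r _.
have cyc := cycle_orbit finj r.
have -> : \sum_(x <- orbit f r) ((order f x)%:R : rat)^-1 =
          \sum_(x <- orbit f r) ((order f r)%:R : rat)^-1.
  apply: eq_big_seq => x xo.
  by rewrite (eq_order_cycle cyc (in_orbit f r) xo).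
rewrite big_uniq ?orbit_uniq // sumr_const.
rewrite -[#|_|]/(#|[pred x in orbit f r]|) (card_uniqP (orbit_uniq f r)) size_orbit.
by rewrite -[_ *+ _]mulr_natr mulVf // pnatr_eq0 -lt0n order_gt0.
Qed.
End Orb.

Lemma sum1_orbit (T : finType) (f : T -> T) r :
  \sum_(x <- orbit f r) (1 : rat) = (order f r)%:R.
Proof.
rewrite big_uniq ?orbit_uniq // sumr_const.
by rewrite -[#|_|]/(#|[pred x in orbit f r]|) (card_uniqP (orbit_uniq f r)) size_orbit.
Qed.

Lemma curvE (m : cmap) (d : dart m) :
  curv d = 1 - (size (fvec d))%:R / 2 + \sum_(k <- fvec d) (k%:R : rat)^-1.
Proof. by rewrite /curv big_map /fvec size_map size_orbit. Qed.

Lemma curv_perm (m : cmap) (d : dart m) s : perm_eq (fvec d) s ->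
  curv d = 1 - (size s)%:R / 2 + \sum_(k <- s) (k%:R : rat)^-1.
Proof. by move=> p; rewrite curvE (perm_size p) (perm_big _ p). Qed.

Lemma curvZ (m : cmap) (d : dart m) :
  perm_eq (fvec d) [:: 5; 6; 7]%N || perm_eq (fvec d) [:: 3; 3; 5; 7]%N ->
  curv d = 1 / 105.
Proof.
case/orP=> /curv_perm -> ; rewrite !big_cons big_nil /=; by field.
Qed.

Lemma two_nE (m : cmap) : (nE m * 2 = #|dart m|)%N.
Proof.
rewrite /nE; apply: fcard_order_set; first exact: inv_inj (edgeK m).
  apply/subsetP => x _; rewrite inE; apply/eqP.
  have cyc : fcycle (edge m) [:: x; edge m x].
    by rewrite /= !eqxx /= (edgeK m) eqxx.
  apply: (order_cycle cyc) => //; last by rewrite mem_head.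
  by rewrite /= inE eq_sym (negbTE (edge_nofix m x)).
by move=> x y _.
Qed.

Lemma total_curv (m : cmap) : spherical m ->
  \sum_(d | froots (node m) d) curv d = 2.
Proof.
case=> _ eul.
have ninj := node_inj m.
have einj : injective (edge m) := inv_inj (edgeK m).
have finj : injective (face m) by apply: inj_comp.
have hE := two_nE m.
have hV : nV m = #|froots (node m)| by apply: eq_card => x; rewrite !inE andbT.
have hF : nF m = #|froots (face m)| by apply: eq_card => x; rewrite !inE andbT.
have Sdeg : \sum_(d | froots (node m) d) ((deg d)%:R : rat) = #|dart m|%:R.
  rewrite -sumr_const -(sum_orbits ninj); apply: eq_bigr => r _.
  by rewrite sum1_orbit.
have Sf : \sum_(d | froots (node m) d) \sum_(x <- orbit (node m) d) ((fsize x)%:R : rat)^-1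
   = (nF m)%:R.
  by rewrite (sum_orbits ninj) hF -(sum_inv_order finj).
rewrite /curv big_split /= big_split /= Sf.
rewrite sumrN -mulr_suml Sdeg sumr_const -hV.
have e1 : ((nV m)%:R + (nF m)%:R : rat) = (nE m)%:R + 2 by rewrite -!natrD eul.
have e2 : ((nE m)%:R * 2 : rat) = (#|dart m|)%:R by rewrite -hE natrM.
rewrite -e2; lra.
Qed.

Theorem lemma15p1 (m : cmap) (Hm : planar_PCC m) : (Zcount m <= 210)%N.
Proof.
case: Hm => sph [_ [pos _]].
have tot := total_curv sph.
rewrite (bigID (fun d => perm_eq (fvec d) [:: 5; 6; 7]%N || perm_eq (fvec d) [:: 3; 3; 5; 7]%N)) /= in tot.
have h2 : 0 <= \sum_(i | froots (node m) i && ~~ (perm_eq (fvec i) [:: 5; 6; 7]%N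
       || perm_eq (fvec i) [:: 3; 3; 5; 7]%N)) curv i.
  by apply: sumr_ge0 => i _; apply: ltW; case: (pos i).
have h1 : \sum_(i | froots (node m) i && (perm_eq (fvec i) [:: 5; 6; 7]%N
       || perm_eq (fvec i) [:: 3; 3; 5; 7]%N)) curv i = (Zcount m)%:R / 105.
  rewrite (eq_bigr (fun _ => 1 / 105)); last by move=> i /andP[_ /curvZ].
  rewrite sumr_const; transitivity ((1 / 105 : rat) *+ Zcount m).
    by congr (_ *+ _); apply: eq_card.
  by rewrite -mulr_natr; field.
have : ((Zcount m)%:R : rat) <= 210 by lra.
by rewrite -(ler_nat rat).
Qed.
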